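(* Let $K$ be a field of characteristic zero, $m\ge1$, and $<$ a monomial order on $\mathbb{N}^m$. Then the set \[ \mathfrak{m}_< := \{f/g\in K(\!(\mathbf{t})\!)^\circ : f,g\in K[\![\mathbf{t}]\!],\ f_{\min_<(\operatorname{Supp}(g))}=0\} \] is a maximal ideal of $K(\!(\mathbf{t})\!)^\circ$ (membership being independent of the representation $f/g$).
   Context: $f_I$ denotes the coefficient of $\mathbf{t}^I$ in $f$; $\min_<$ is the minimum with respect to $<$ (which exists since monomial orders are well-orders). A monomial order is a total order $<$ on $\mathbb{N}^m$ with $0<a$ for $a\ne0$ and $a<b\Rightarrow a+c<b+c$. $K(\!(\mathbf{t})\!)=\operatorname{Frac}K[\![\mathbf{t}]\!]$, $\mathbf{t}=(t_1,\dots,t_m)$. $V\mathbb{B}[\mathbf{t}]$ is the semiring of subsets of $\mathbb{N}^m$ equal to the vertex set of their Newton polyhedron $\operatorname{conv}(\cdot)+\mathbb{R}^m_{\ge0}$, with $a\oplus b$ = vertices of the Newton polyhedron of $a\cup b$, $a\odot b$ = vertices of that of $a+b$; $V\mathbb{B}(\mathbf{t})$ its fraction semifield ordered by $a/b\le c/d$ iff $a\odot d\oplus b\odot c=b\odot c$. $\operatorname{trop}(f)$ is the vertex set of the Newton polyhedron of $\operatorname{Supp}(f)$, $\operatorname{trop}(f/g)=\operatorname{trop}(f)/\operatorname{trop}(g)$, and $K(\!(\mathbf{t})\!)^\circ=\{q:\operatorname{trop}(q)\le1\}$. *)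

(* Defs.v *)
From mathcomp Require Import Rstruct.
From HB Require Import structures.
From mathcomp Require Import all_boot all_order all_algebra.

Set Implicit Arguments. Unset Strict Implicit. Unset Printing Implicit Defensive.
Import Order.TTheory GRing.Theory Num.Theory.
Local Open Scope ring_scope.
Notation R := Rdefinitions.R.

Definition mon (m : nat) := {ffun 'I_m -> nat}.
Definition mzero (m : nat) : mon m := [ffun _ => 0%N].
Definition madd (m : nat) (a b : mon m) : mon m := [ffun i => (a i + b i)%N].

Definition monomial_order (m : nat) (lt : mon m -> mon m -> Prop) : Prop :=
  [/\ (forall a, ~ lt a a),
      (forall a b c, lt a b -> lt b c -> lt a c),
      (forall a b, a <> b -> lt a b \/ lt b a),
      (forall a, a <> @mzero m -> lt (@mzero m) a)
    & (forall a b c, lt a b -> lt (madd a c) (madd b c))].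

Definition ps (K : fieldType) (m : nat) := mon m -> K.

Definition ps0 (K : fieldType) (m : nat) : ps K m := fun _ => 0.
Definition ps1 (K : fieldType) (m : nat) : ps K m :=
  fun a => if a == @mzero m then 1 else 0.
Definition psadd (K : fieldType) (m : nat) (f g : ps K m) : ps K m :=
  fun a => f a + g a.
(* Cauchy product: (fg)_c = sum_{b <= c} f_b g_{c-b}. *)
Definition psmul (K : fieldType) (m : nat) (f g : ps K m) : ps K m :=
  fun c => \sum_(J : {ffun 'I_m -> 'I_((\sum_(i < m) c i)%N.+1)}
                   | [forall i, (J i <= c i)%N])
             f [ffun i => nat_of_ord (J i)] * g [ffun i => (c i - J i)%N].

Definition supp (K : fieldType) (m : nat) (f : ps K m) : mon m -> Prop :=
  fun a => f a != 0.

Definition pfrac (K : fieldType) (m : nat) := (ps K m * ps K m)%type.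
Definition fvalid (K : fieldType) (m : nat) (p : pfrac K m) : Prop :=
  exists a, p.2 a != 0.
Definition feq (K : fieldType) (m : nat) (p q : pfrac K m) : Prop :=
  forall c, psmul p.1 q.2 c = psmul q.1 p.2 c.
Definition fzero (K : fieldType) (m : nat) : pfrac K m := (@ps0 K m, @ps1 K m).
Definition fone (K : fieldType) (m : nat) : pfrac K m := (@ps1 K m, @ps1 K m).
Definition fadd (K : fieldType) (m : nat) (p q : pfrac K m) : pfrac K m :=
  (psadd (psmul p.1 q.2) (psmul q.1 p.2), psmul p.2 q.2).
Definition fmul (K : fieldType) (m : nat) (p q : pfrac K m) : pfrac K m :=
  (psmul p.1 q.1, psmul p.2 q.2).

Definition realv (m : nat) (a : mon m) : 'I_m -> R := fun i => (a i)%:R.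

(* conv(S) + R^m_{>=0} *)
Definition newton (m : nat) (S : mon m -> Prop) : ('I_m -> R) -> Prop :=
  fun x => exists (n : nat) (a : 'I_n -> mon m) (w : 'I_n -> R),
    [/\ (forall k, S (a k)), (forall k, 0 <= w k), \sum_(k < n) w k = 1
      & forall i, \sum_(k < n) w k * (a k i)%:R <= x i].

Definition is_vertex (m : nat) (P : ('I_m -> R) -> Prop) (v : 'I_m -> R) : Prop :=
  P v /\ forall (x y : 'I_m -> R) (t : R), P x -> P y -> 0 < t -> t < 1 ->
    (forall i, v i = t * x i + (1 - t) * y i) -> forall i, x i = y i.

Definition vtx (m : nat) (S : mon m -> Prop) : mon m -> Prop :=
  fun a => is_vertex (newton S) (realv a).

Definition seteq (m : nat) (A B : mon m -> Prop) : Prop := forall a, A a <-> B a.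

Definition voplus (m : nat) (A B : mon m -> Prop) : mon m -> Prop :=
  vtx (fun a => A a \/ B a).
Definition vodot (m : nat) (A B : mon m -> Prop) : mon m -> Prop :=
  vtx (fun c => exists a b, [/\ A a, B b & c = madd a b]).
Definition vone (m : nat) : mon m -> Prop := fun a => a = @mzero m.

(* order of VB(t): a/b <= c/d iff (a . d) (+) (b . c) = b . c *)
Definition vle (m : nat) (a b c d : mon m -> Prop) : Prop :=
  seteq (voplus (vodot a d) (vodot b c)) (vodot b c).

Definition trop (K : fieldType) (m : nat) (f : ps K m) : mon m -> Prop :=
  vtx (supp f).

Definition inO (K : fieldType) (m : nat) (p : pfrac K m) : Prop :=
  fvalid p /\ vle (trop p.1) (trop p.2) (@vone m) (@vone m).

Definition is_min_supp (K : fieldType) (m : nat) (lt : mon m -> mon m -> Prop)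
  (g : ps K m) (x : mon m) : Prop :=
  supp g x /\ forall y, supp g y -> y <> x -> lt x y.

Definition mcond (K : fieldType) (m : nat) (lt : mon m -> mon m -> Prop)
  (p : pfrac K m) : Prop :=
  exists x, is_min_supp lt p.2 x /\ p.1 x = 0.

Definition mlt (K : fieldType) (m : nat) (lt : mon m -> mon m -> Prop)
  (p : pfrac K m) : Prop :=
  inO p /\ exists q, [/\ fvalid q, feq p q & mcond lt q].

(* J is a subset of K((t))^o (a predicate on representations, invariant
   under equality of fractions) which is an ideal. *)
Definition idealO (K : fieldType) (m : nat) (J : pfrac K m -> Prop) : Prop :=
  [/\ (forall p, J p -> inO p),
      (forall p q, fvalid q -> feq p q -> J p -> J q),
      J (@fzero K m),
      (forall p q, J p -> J q -> J (fadd p q))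
    & (forall r p, inO r -> J p -> J (fmul r p))].

Definition maximal_idealO (K : fieldType) (m : nat) (J : pfrac K m -> Prop) : Prop :=
  [/\ idealO J, ~ J (@fone K m)
    & forall J', idealO J' -> (forall p, J p -> J' p) ->
        (forall p, J' p -> J p) \/ (forall p, inO p -> J' p)].

(* Main.v *)
From Stdlib Require Import Classical List Lia FunctionalExtensionality.
From mathcomp Require Import Rstruct.
Require Import Defs.
From HB Require Import structures.
From mathcomp Require Import all_boot all_order all_algebra.
From mathcomp Require boolp.
From mathcomp.algebra_tactics Require Import ring lra.
From mathcomp Require Import zify.
Set Implicit Arguments. Unset Strict Implicit. Unset Printing Implicit Defensive.

Module P1.
Import Order.TTheory GRing.Theory Num.Theory.
Local Open Scope ring_scope.

Section FM.
Variable F : realFieldType.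
Definition con := ((nat -> F) * F)%type.
Definition lhs (k : nat) (c x : nat -> F) : F := \sum_(j < k) c j * x j.
Definition satk k (S : seq con) x := forall e, List.In e S -> lhs k e.1 x <= e.2.
Definition supp_lt k (S : seq con) := forall e, List.In e S -> forall j, (k <= j)%N -> e.1 j = 0.

Inductive cone (S : seq con) : (nat -> F) -> F -> Prop :=
 | cmem e : List.In e S -> cone S e.1 e.2
 | cadd c1 d1 c2 d2 : cone S c1 d1 -> cone S c2 d2 -> cone S (fun j => c1 j + c2 j) (d1 + d2)
 | cscale t c d : 0 <= t -> cone S c d -> cone S (fun j => t * c j) (t * d).

Lemma cone_trans (S S' : seq con) c d :
  (forall e, List.In e S' -> cone S e.1 e.2) -> cone S' c d -> cone S c d.
Proof.
move=> H; elim=> {c d}.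
- by move=> e /H.
- by move=> c1 d1 c2 d2 _ h1 _ h2; apply: cadd.
- by move=> t c d t0 _ h; apply: cscale.
Qed.

Lemma lhs_lin k a b c1 c2 x :
  lhs k (fun j => a * c1 j + b * c2 j) x = a * lhs k c1 x + b * lhs k c2 x.
Proof.
rewrite /lhs !mulr_sumr -big_split /=; apply: eq_bigr => j _; ring.
Qed.

Lemma max_ge (s : F) L l : List.In l L -> l <= foldr Num.max s L.
Proof.
elim: L => //= a L IH [<-|/IH h]; first by rewrite le_max lexx.
by rewrite le_max h orbT.
Qed.
Lemma max_ge0 (s : F) L : s <= foldr Num.max s L.
Proof. elim: L => //= a L IH; by rewrite le_max IH orbT. Qed.
Lemma max_le (s u : F) L : s <= u -> (forall l, List.In l L -> l <= u) -> foldr Num.max s L <= u.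
Proof.
move=> su; elim: L => //= a L IH H; rewrite ge_max H /=; last by left.
by apply: IH => l hl; apply: H; right.
Qed.
Lemma min_le (s : F) L l : List.In l L -> foldr Num.min s L <= l.
Proof.
elim: L => //= a L IH [<-|/IH h]; first by rewrite ge_min lexx.
by rewrite ge_min h orbT.
Qed.

Theorem farkas k : forall S, supp_lt k S ->
  (exists x, satk k S x) \/ (exists c d, [/\ cone S c d, (forall j, c j = 0) & d < 0]).
Proof.
elim: k => [|k IH] S hS.
  case: (classic (exists e, List.In e S /\ e.2 < 0)) => [[e [he hd]]|hn].
    right; exists e.1, e.2; split => //; first exact: cmem.
    by move=> j; apply: hS.
  left; exists (fun _ => 0) => e he; rewrite /lhs big_ord0.
  by case: (lerP 0 e.2) => // h; case: hn; exists e.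
pose P := List.filter (fun e : con => 0 < e.1 k) S.
pose N := List.filter (fun e : con => e.1 k < 0) S.
pose Z := List.filter (fun e : con => e.1 k == 0) S.
pose comb (p q : con) : con := (fun j => (- q.1 k) * p.1 j + p.1 k * q.1 j,
                                (- q.1 k) * p.2 + p.1 k * q.2).
pose S' := Z ++ flat_map (fun p => map (fun q => comb p q) N) P.
have inS' e : List.In e S' <-> List.In e Z \/ exists p q, [/\ List.In p P, List.In q N & e = comb p q].
  rewrite /S' in_app_iff in_flat_map; split.
    case=> [h|[p [hp /in_map_iff [q [<- hq]]]]]; first by left.
    by right; exists p, q.
  case=> [h|[p [q [hp hq ->]]]]; first by left.
  by right; exists p; split => //; apply/in_map_iff; exists q.
have hS' : supp_lt k S'.
  move=> e /inS' [/filter_In [he /eqP hk]|[p [q [/filter_In [hp _] /filter_In [hq _] ->]]]] j hj.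
    by case: (ltngtP k j) hj => // [/hS -> //| <-].
  rewrite /comb /=; case: (ltngtP k j) hj => // [hkj|<-] _; last by ring.
  by rewrite (hS p hp j hkj) (hS q hq j hkj); ring.
case: (IH S' hS') => [[x' hx]|[c [d [hc h0 hd]]]]; last first.
  right; exists c, d; split => //; apply: cone_trans hc => e /inS'
    [/filter_In [he _]|[p [q [/filter_In [hp hpk] /filter_In [hq hqk] ->]]]]; first exact: cmem.
  apply: (@cadd S (fun j => - q.1 k * p.1 j) _ (fun j => p.1 k * q.1 j)).
    apply: (@cscale S _ p.1 p.2); last exact: cmem.
    by rewrite oppr_ge0; apply/ltW; exact: hqk.
  apply: (@cscale S _ q.1 q.2); last exact: cmem.
  by apply/ltW; exact: hpk.
pose r (e : con) := e.2 - lhs k e.1 x'.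
pose L := map (fun q : con => r q / q.1 k) N.
pose U := map (fun p : con => r p / p.1 k) P.
pose t := foldr Num.max (foldr Num.min 0 U) L.
have key p q : List.In p P -> List.In q N -> r q / q.1 k <= r p / p.1 k.
  move=> hp hq; have := hx _ (proj2 (inS' _) (or_intror (ex_intro _ p (ex_intro _ q (And3 hp hq erefl))))).
  rewrite /comb /= lhs_lin.
  move: hp hq => /filter_In [_ /= hp] /filter_In [_ /= hq] h.
  have hb : 0 < - q.1 k by rewrite oppr_gt0.
  have e1 : r p / p.1 k - r q / q.1 k = ((- q.1 k) * r p + p.1 k * r q) / (p.1 k * (- q.1 k)).
    rewrite /r; field; rewrite (ltr0_neq0 hq) (lt0r_neq0 hp).
    done.
  suff: 0 <= r p / p.1 k - r q / q.1 k by rewrite subr_ge0.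
  rewrite e1; apply: divr_ge0; last by apply: mulr_ge0; apply: ltW.
  rewrite /r; lra.
have tL q : List.In q N -> r q / q.1 k <= t.
  by move=> hq; apply: max_ge; apply/in_map_iff; exists q.
have tU p : List.In p P -> t <= r p / p.1 k.
  move=> hp; apply: max_le.
    by apply: min_le; apply/in_map_iff; exists p.
  by move=> l /in_map_iff [q [<- hq]]; apply: key.
left; exists (fun j => if j == k then t else x' j) => e he.
rewrite /lhs big_ord_recr /= eqxx.
under eq_bigr => j _ do rewrite (ltn_eqF (ltn_ord j)).
rewrite -/(lhs k e.1 x').
case: (ltrgt0P (e.1 k)) => hk.
- have hp : List.In e P by apply/filter_In.
  have := tU e hp; rewrite ler_pdivlMr // /r => h.
  by rewrite mulrC; lra.
- have hq : List.In e N by apply/filter_In.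
  have := tL e hq; rewrite ler_ndivrMr // /r => h.
  by rewrite mulrC; lra.
- have hz : List.In e S' by apply/inS'; left; apply/filter_In; rewrite hk eqxx.
  by rewrite hk mul0r addr0; apply: hx.
Qed.

Lemma sum_delta n (k : nat) (v : nat -> F) : (k < n)%N ->
  \sum_(j < n) (if (j : nat) == k then v j else 0) = v k.
Proof.
move=> hk; rewrite (bigD1 (Ordinal hk)) //= eqxx big1 ?addr0 // => j hj.
by rewrite ifN //; apply: contra hj => /eqP h; apply/eqP/val_inj.
Qed.

Lemma lhs_restr n (v x : nat -> F) :
  lhs n (fun j => if (j < n)%N then v j else 0) x = \sum_(j < n) v j * x j.
Proof. by apply: eq_bigr => j _; rewrite ltn_ord. Qed.

Theorem separation n m (A : nat -> nat -> F) (a : nat -> F) :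
  (exists lam : nat -> F, [/\ forall k, (k < n)%N -> 0 <= lam k,
      \sum_(k < n) lam k = 1 & forall i, (i < m)%N -> \sum_(k < n) lam k * A k i <= a i])
  \/ (exists (u : nat -> F) g, [/\ forall i, (i < m)%N -> 0 <= u i,
      \sum_(i < m) u i * a i < g & forall k, (k < n)%N -> g <= \sum_(i < m) u i * A k i]).
Proof.
pose cK (k : nat) : con := (fun j => if j == k then -1 else 0, 0).
pose c1 : con := (fun j => if (j < n)%N then 1 else 0, 1).
pose c2 : con := (fun j => if (j < n)%N then -1 else 0, -1).
pose cR (i : nat) : con := (fun j => if (j < n)%N then A j i else 0, a i).
pose S := map cK (iota 0 n) ++ c1 :: c2 :: map cR (iota 0 m).
have inS e : List.In e S -> [\/ exists2 k, (k < n)%N & e = cK k, e = c1, e = c2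
                               | exists2 i, (i < m)%N & e = cR i].
  rewrite /S in_app_iff /= => [[/in_map_iff [k [<- /in_seq hk]]|[<-|[<-|/in_map_iff [i [<- /in_seq hi]]]]]].
  - by constructor 1; exists k => //; apply/ssrnat.ltP; lia.
  - by constructor 2.
  - by constructor 3.
  - by constructor 4; exists i => //; apply/ssrnat.ltP; lia.
have hS : supp_lt n S.
  move=> e /inS [[k hk ->]|->|->|[i hi ->]] j hj /=.
  - by rewrite ifN //; apply/eqP => ejk; move: hk; rewrite -ejk ltnNge hj.
  - by rewrite ltnNge hj.
  - by rewrite ltnNge hj.
  - by rewrite ltnNge hj.
have mS e : List.In e S -> cone S e.1 e.2 by exact: cmem.
case: (farkas hS) => [[x hx]|[c [d [hc h0 hd]]]].
  left; exists x; split.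
  - move=> k hk; have := hx (cK k) (proj2 (in_app_iff _ _ _) (or_introl (in_map _ _ _ (proj2 (in_seq _ _ _) (conj (le_0_n _) (ssrnat.ltP hk)))))).
    rewrite /lhs /=.
    under eq_bigr => j _ do rewrite (fun_if (fun z => z * x j)) mul0r.
    by rewrite (sum_delta (fun j => -1 * x j)) // mulN1r oppr_le0.
  - have i1 : List.In c1 S by apply/in_app_iff; right; left.
    have i2 : List.In c2 S by apply/in_app_iff; right; right; left.
    have h1 := hx c1 i1; have h2 := hx c2 i2.
    move: h1 h2; rewrite /= !lhs_restr.
    have -> : \sum_(j < n) (fun=> 1) j * x j = \sum_(k < n) x k by apply: eq_bigr => j _; rewrite mul1r.
    have -> : \sum_(j < n) (fun=> -1) j * x j = - \sum_(k < n) x k.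
      by rewrite -sumrN; apply: eq_bigr => j _; rewrite mulN1r.
    rewrite lerN2 => h1 h2; apply/eqP; rewrite eq_le h1 h2 //.
  - move=> i hi; have iR : List.In (cR i) S.
      by apply/in_app_iff; right; right; right; apply: in_map; apply/in_seq; move/ssrnat.ltP: hi; lia.
    have := hx (cR i) iR.
    by rewrite /= lhs_restr; under eq_bigr => j _ do rewrite mulrC.
pose Inv (c : nat -> F) d := exists s (u : nat -> F), [/\ forall i, (i < m)%N -> 0 <= u i,
   forall k, (k < n)%N -> c k <= s + \sum_(i < m) u i * A k i & d = s + \sum_(i < m) u i * a i].
have u0 (B : nat -> F) : \sum_(i < m) (fun _ => 0) i * B i = 0 by rewrite big1 // => i _; rewrite mul0r.
have HI : Inv c d.
  elim: hc {h0 hd} => {c d}.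
  - move=> e /inS [[k hk ->]|->|->|[i hi ->]] /=.
    + exists 0, (fun _ => 0); split => //= [k' _|]; rewrite u0 addr0 //.
      by case: eqP => _; rewrite ?oppr_le0 ?ler01.
    + exists 1, (fun _ => 0); split => //= [k' hk'|]; by rewrite u0 ?addr0 // hk'.
    + exists (-1), (fun _ => 0); split => //= [k' hk'|]; by rewrite u0 ?addr0 // hk'.
    + exists 0, (fun i' => if i' == i then 1 else 0); split => //= [i' _|k' hk'|].
      * by case: eqP.
      * rewrite hk' add0r.
        under eq_bigr => j _ do rewrite (fun_if (fun z => z * A k' j)) mul1r mul0r.
        by rewrite (sum_delta (fun j => _ j)).
      * rewrite add0r.
        under eq_bigr => j _ do rewrite (fun_if (fun z => z * a j)) mul1r mul0r.
        by rewrite (sum_delta (fun j => _ j)).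
  - move=> c1' d1 c2' d2 _ [s1 [u1 [hu1 hc1 ->]]] _ [s2 [u2 [hu2 hc2 ->]]].
    exists (s1 + s2), (fun i => u1 i + u2 i); split => /=.
    + by move=> i hi; rewrite addr_ge0 ?hu1 ?hu2.
    + move=> k hk; under eq_bigr => i _ do rewrite mulrDl.
      rewrite big_split /=; have := hc1 k hk; have := hc2 k hk; lra.
    + have -> : \sum_(i < m) (u1 i + u2 i) * a i = \sum_(i < m) u1 i * a i + \sum_(i < m) u2 i * a i.
        by rewrite -big_split; apply: eq_bigr => i _; rewrite mulrDl.
      lra.
  - move=> t c' d' ht _ [s [u [hu hc' ->]]].
    exists (t * s), (fun i => t * u i); split => /=.
    + by move=> i hi; rewrite mulr_ge0 ?hu.
    + move=> k hk.
      have -> : \sum_(i < m) t * u i * A k i = t * \sum_(i < m) u i * A k i.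
        by rewrite mulr_sumr; apply: eq_bigr => i _; rewrite mulrA.
      by rewrite -mulrDr ler_wpM2l // hc'.
    + have -> : \sum_(i < m) t * u i * a i = t * \sum_(i < m) u i * a i.
        by rewrite mulr_sumr; apply: eq_bigr => i _; rewrite mulrA.
      by rewrite mulrDr.
case: HI => s [u [hu hcu hdu]].
right; exists u, (- s); split => //.
- by move: hd; rewrite hdu; lra.
- by move=> k hk; have := hcu k hk; rewrite h0; lra.
Qed.
End FM.

End P1.

Module P2.
Import P1.
Import Order.TTheory GRing.Theory Num.Theory.

Section Mon.
Variable m : nat.

Definition mle (a b : mon m) := forall i, (a i <= b i)%N.
Definition msub (a b : mon m) : mon m := [ffun i => a i - b i]%N.
Definition msc (n : nat) (a : mon m) : mon m := [ffun i => n * a i]%N.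

Lemma maddC (a b : mon m) : madd a b = madd b a.
Proof. by apply/ffunP => i; rewrite !ffunE addnC. Qed.
Lemma maddA (a b c : mon m) : madd a (madd b c) = madd (madd a b) c.
Proof. by apply/ffunP => i; rewrite !ffunE addnA. Qed.
Lemma madd0 (a : mon m) : madd a (@mzero m) = a.
Proof. by apply/ffunP => i; rewrite !ffunE addn0. Qed.
Lemma mad0d (a : mon m) : madd (@mzero m) a = a.
Proof. by rewrite maddC madd0. Qed.
Lemma msubK (a b : mon m) : mle b a -> madd b (msub a b) = a.
Proof. by move=> h; apply/ffunP => i; rewrite !ffunE subnKC. Qed.
Lemma maddK (a b : mon m) : msub (madd a b) a = b.
Proof. by apply/ffunP => i; rewrite !ffunE addKn. Qed.
Lemma madd_inj (a b c : mon m) : madd a b = madd a c -> b = c.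
Proof. by move=> h; rewrite -(maddK a b) h maddK. Qed.
Lemma mle_add (a b : mon m) : mle a (madd a b).
Proof. by move=> i; rewrite ffunE leq_addr. Qed.
Lemma mle_trans (a b c : mon m) : mle a b -> mle b c -> mle a c.
Proof. by move=> h1 h2 i; apply: leq_trans (h1 i) (h2 i). Qed.
Lemma mle_refl (a : mon m) : mle a a.
Proof. by move=> i. Qed.

Lemma dickson_k k : forall S : mon m -> Prop, exists Fl : seq (mon m),
  (forall f, f \in Fl -> S f) /\
  forall s, S s -> exists2 f, f \in Fl & forall i : 'I_m, (i < k)%N -> (f i <= s i)%N.
Proof.
elim: k => [|k IH] S.
  case: (classic (exists s, S s)) => [[s hs]|hn].
    by exists [:: s]; split => [f|s' _]; [rewrite inE => /eqP ->|exists s; rewrite ?inE].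
  by exists [::]; split => // s hs; case: hn; exists s.
case: (classic (exists ik : 'I_m, val ik = k)) => [[ik hik]|hn]; last first.
  have [Fl [h1 h2]] := IH S; exists Fl; split => // s /h2 [f hf hfs]; exists f => // i hi.
  apply: hfs; rewrite ltn_neqAle -ltnS hi andbT; apply/eqP => e; apply: hn; by exists i.
have [Fl [h1 h2]] := IH S.
pose d := foldr maxn 0%N [seq f ik | f : mon m <- Fl].
have hd f : f \in Fl -> (f ik <= d)%N.
  rewrite /d; elim: (Fl) => //= g l IHl; rewrite inE => /orP [/eqP ->|/IHl h].
    by rewrite leq_maxl.
  by rewrite (leq_trans h) // leq_maxr.
have hG : forall d', exists G : seq (mon m), (forall g, g \in G -> S g) /\
   forall s, S s -> (s ik < d')%N -> exists2 g, g \in G & forall i : 'I_m, (i < k.+1)%N -> (g i <= s i)%N.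
  elim=> [|d' [G [hG1 hG2]]]; first by exists [::].
  have [Gd [hd1 hd2]] := IH (fun s => S s /\ s ik = d').
  exists (Gd ++ G); split.
    by move=> g; rewrite mem_cat => /orP [/hd1 []|/hG1].
  move=> s hs; rewrite ltnS leq_eqVlt => /orP [/eqP e|hlt]; last first.
    by have [g hg hgs] := hG2 s hs hlt; exists g; rewrite ?mem_cat ?hg ?orbT.
  have [g hg hgs] := hd2 s (conj hs e); exists g; first by rewrite mem_cat hg.
  move=> i; rewrite ltnS leq_eqVlt => /orP [/eqP ei|hi]; last exact: hgs.
  have -> : i = ik by apply: val_inj; rewrite /= ei hik.
  by have [_ ->] := hd1 g hg; rewrite e.
have [G [hG1 hG2]] := hG d.
exists (Fl ++ G); split.
  by move=> g; rewrite mem_cat => /orP [/h1|/hG1].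
move=> s hs; case: (ltnP (s ik) d) => hsd.
  by have [g hg hgs] := hG2 s hs hsd; exists g; rewrite ?mem_cat ?hg ?orbT.
have [f hf hfs] := h2 s hs; exists f; first by rewrite mem_cat hf.
move=> i; rewrite ltnS leq_eqVlt => /orP [/eqP ei|hi]; last exact: hfs.
have -> : i = ik by apply: val_inj; rewrite /= ei hik.
exact: leq_trans (hd f hf) hsd.
Qed.

Lemma dickson (S : mon m -> Prop) : exists Fl : seq (mon m),
  (forall f, f \in Fl -> S f) /\ forall s, S s -> exists2 f, f \in Fl & mle f s.
Proof.
have [Fl [h1 h2]] := dickson_k m S; exists Fl; split => // s /h2 [f hf hfs].
by exists f => // i; apply: hfs.
Qed.

Variable lt : mon m -> mon m -> Prop.
Hypothesis Hmo : monomial_order lt.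
Definition leo (a b : mon m) := lt a b \/ a = b.

Lemma lt_irr a : ~ lt a a. Proof. by case: Hmo => h _ _ _ _; exact: h. Qed.
Lemma lt_trans a b c : lt a b -> lt b c -> lt a c. Proof. by case: Hmo => _ h _ _ _; exact: (h a b c). Qed.
Lemma lt_total a b : a <> b -> lt a b \/ lt b a. Proof. by case: Hmo => _ _ h _ _; exact: (h a b). Qed.
Lemma lt0 a : a <> @mzero m -> lt (@mzero m) a. Proof. by case: Hmo => _ _ _ h _; exact: (h a). Qed.
Lemma lt_addr a b c : lt a b -> lt (madd a c) (madd b c). Proof. by case: Hmo => _ _ _ _ h; exact: (h a b c). Qed.
Lemma lt_addl a b c : lt a b -> lt (madd c a) (madd c b).
Proof. by rewrite ![madd c _]maddC; apply: lt_addr. Qed.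

Lemma leo_refl a : leo a a. Proof. by right. Qed.
Lemma leo_trans a b c : leo a b -> leo b c -> leo a c.
Proof.
case=> [h1|->] //; case=> [h2|<-]; last by left.
by left; apply: lt_trans h1 h2.
Qed.
Lemma leo_lt_trans a b c : leo a b -> lt b c -> lt a c.
Proof. by case=> [h1|->] // h2; apply: lt_trans h1 h2. Qed.
Lemma lt_leo_trans a b c : lt a b -> leo b c -> lt a c.
Proof. by move=> h1 [h2|<-] //; apply: lt_trans h1 h2. Qed.
Lemma leo_total a b : leo a b \/ lt b a.
Proof. by case: (classic (a = b)) => [->|/lt_total [h|h]]; [left; right|left; left|right]. Qed.
Lemma lt_not_leo a b : lt a b -> ~ leo b a.
Proof. by move=> h1 h2; apply: (lt_irr (lt_leo_trans h1 h2)). Qed.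
Lemma leo_antisym a b : leo a b -> leo b a -> a = b.
Proof. by case=> // h /(lt_not_leo h). Qed.
Lemma leo_addr a b c : leo a b -> leo (madd a c) (madd b c).
Proof. by case=> [h|->]; [left; apply: lt_addr|right]. Qed.
Lemma leo_addl a b c : leo a b -> leo (madd c a) (madd c b).
Proof. by rewrite ![madd c _]maddC; apply: leo_addr. Qed.
Lemma leo_add a b c d : leo a b -> leo c d -> leo (madd a c) (madd b d).
Proof. by move=> h1 h2; apply: leo_trans (leo_addr c h1) (leo_addl b h2). Qed.
Lemma lt_leo_add a b c d : lt a b -> leo c d -> lt (madd a c) (madd b d).
Proof. by move=> h1 h2; apply: lt_leo_trans (lt_addr c h1) (leo_addl b h2). Qed.

Lemma leo_self_add a e : leo a (madd a e).
Proof.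
case: (classic (e = @mzero m)) => [->|/lt0 h]; first by rewrite madd0; right.
by left; rewrite -{1}(madd0 a); apply: lt_addl.
Qed.
Lemma mle_leo a b : mle a b -> leo a b.
Proof. by move=> h; rewrite -(msubK h); apply: leo_self_add. Qed.

Lemma list_min (l : seq (mon m)) x0 : x0 \in l ->
  exists2 x, x \in l & forall y, y \in l -> leo x y.
Proof.
elim: l x0 => // a l IH _ _; case: (classic (exists y, y \in l)) => [[y hy]|hn].
  have [x hx hxl] := IH y hy; case: (leo_total a x) => h.
    exists a; rewrite ?inE ?eqxx // => z; rewrite inE => /orP [/eqP ->|/hxl hz].
      exact: leo_refl.
    exact: leo_trans h hz.
  exists x; first by rewrite inE hx orbT.
  move=> z; rewrite inE => /orP [/eqP ->|/hxl //]; by left.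
exists a; rewrite ?inE ?eqxx // => z; rewrite inE => /orP [/eqP ->|hz]; first exact: leo_refl.
by case: hn; exists z.
Qed.

Lemma exists_min (S : mon m -> Prop) s0 : S s0 ->
  exists a, S a /\ forall s, S s -> leo a s.
Proof.
move=> hs0; have [Fl [h1 h2]] := dickson S.
have [f0 hf0 _] := h2 s0 hs0.
have [x hx hxl] := list_min hf0.
exists x; split; first exact: h1.
move=> s /h2 [f hf hfs]; exact: leo_trans (hxl f hf) (mle_leo hfs).
Qed.

Lemma msc0 a : msc 0 a = @mzero m.
Proof. by apply/ffunP => i; rewrite !ffunE. Qed.
Lemma mscS n a : msc n.+1 a = madd a (msc n a).
Proof. by apply/ffunP => i; rewrite !ffunE mulSn. Qed.
Lemma leo_msc n a b : leo a b -> leo (msc n a) (msc n b).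
Proof.
move=> h; elim: n => [|n IH]; first by rewrite !msc0; right.
by rewrite !mscS; apply: leo_add.
Qed.
Lemma lt_msc n a b : (0 < n)%N -> lt a b -> lt (msc n a) (msc n b).
Proof.
case: n => // n _ h; rewrite !mscS; apply: lt_leo_add => //; exact: leo_msc (or_introl h).
Qed.
Lemma msc_leo_cancel n a b : (0 < n)%N -> leo (msc n a) (msc n b) -> leo a b.
Proof.
move=> hn h; case: (leo_total a b) => // hba.
by case: (lt_not_leo (lt_msc hn hba) h).
Qed.

End Mon.

End P2.

Module P3.
Import P1 P2.
Import Order.TTheory GRing.Theory Num.Theory.
Local Open Scope ring_scope.

Section Geo.
Variable m : nat.
Implicit Types (S T A B : mon m -> Prop) (x y : 'I_m -> R) (l : seq (R * mon m)).

Definition comb l (i : 'I_m) : R := \sum_(p <- l) p.1 * ((p.2 i)%:R).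
Definition wsum l : R := \sum_(p <- l) p.1.
Definition okl S l := forall p, p \in l -> S p.2 /\ 0 <= p.1.
Definition NL S x := exists l, [/\ okl S l, wsum l = 1 & forall i, comb l i <= x i].

Lemma newtonE S x : newton S x <-> NL S x.
Proof.
split.
  case=> n [a [w [hS hw hsum hx]]].
  exists [seq (w k, a k) | k <- index_enum 'I_n]; split.
  - by move=> p /mapP [k _ ->]; split; [apply: hS|apply: hw].
  - by rewrite /wsum big_map.
  - by move=> i; rewrite /comb big_map.
case=> l [hok hw hc].
pose x0 : R * mon m := (0, @mzero m).
exists (size l), (fun k => (nth x0 l k).2), (fun k => (nth x0 l k).1); split.
- by move=> k; case: (hok (nth x0 l k)) => //; apply: mem_nth.
- by move=> k; case: (hok (nth x0 l k)) => //; apply: mem_nth.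
- by rewrite -hw /wsum (big_nth x0) big_mkord.
- by move=> i; apply: le_trans (hc i); rewrite /comb (big_nth x0) big_mkord.
Qed.

Lemma wsum_cons p l : wsum (p :: l) = p.1 + wsum l. Proof. by rewrite /wsum big_cons. Qed.
Lemma comb_cons p l i : comb (p :: l) i = p.1 * (p.2 i)%:R + comb l i. Proof. by rewrite /comb big_cons. Qed.
Lemma wsum_cat l1 l2 : wsum (l1 ++ l2) = wsum l1 + wsum l2. Proof. by rewrite /wsum big_cat. Qed.
Lemma comb_cat l1 l2 i : comb (l1 ++ l2) i = comb l1 i + comb l2 i. Proof. by rewrite /comb big_cat. Qed.
Definition scl (t : R) l := [seq (t * p.1, p.2) | p <- l].
Lemma wsum_scl t l : wsum (scl t l) = t * wsum l.
Proof. by rewrite /wsum big_map mulr_sumr. Qed.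
Lemma comb_scl t l i : comb (scl t l) i = t * comb l i.
Proof. by rewrite /comb big_map mulr_sumr; apply: eq_bigr => p _ /=; rewrite mulrA. Qed.
Lemma okl_scl S t l : 0 <= t -> okl S l -> okl S (scl t l).
Proof. by move=> ht hl p /mapP [q /hl [h1 h2] ->]; split => //=; apply: mulr_ge0. Qed.
Lemma okl_cat S l1 l2 : okl S l1 -> okl S l2 -> okl S (l1 ++ l2).
Proof. by move=> h1 h2 p; rewrite mem_cat => /orP [/h1|/h2]. Qed.
Lemma okl_cons S p l : okl S (p :: l) -> okl S l /\ (S p.2 /\ 0 <= p.1).
Proof. by move=> h; split => [q hq|]; apply: h; rewrite inE ?hq ?orbT ?eqxx. Qed.
Lemma wsum_ge0 S l : okl S l -> 0 <= wsum l.
Proof. by move=> h; rewrite /wsum big_seq sumr_ge0 // => p /h []. Qed.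
Lemma comb_ge0 S l i : okl S l -> 0 <= comb l i.
Proof. by move=> h; rewrite /comb big_seq sumr_ge0 // => p /h [_ hp]; rewrite mulr_ge0. Qed.

Lemma NL_mem S a : S a -> NL S (realv a).
Proof.
move=> ha; exists [:: (1, a)]; split.
- by move=> p; rewrite inE => /eqP -> /=; split.
- by rewrite wsum_cons /wsum big_nil addr0.
- by move=> i; rewrite comb_cons /comb big_nil addr0 mul1r.
Qed.

Lemma NL_up S x y : NL S x -> (forall i, x i <= y i) -> NL S y.
Proof. by case=> l [h1 h2 h3] hxy; exists l; split => // i; apply: le_trans (h3 i) (hxy i). Qed.

Lemma NL_mono S T x : (forall a, S a -> T a) -> NL S x -> NL T x.
Proof. by move=> hST [l [h1 h2 h3]]; exists l; split => // p /h1 [/hST]. Qed.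

Lemma NL_conv S x y t : NL S x -> NL S y -> 0 <= t <= 1 ->
  NL S (fun i => t * x i + (1 - t) * y i).
Proof.
case=> lx [hx1 hx2 hx3] [ly [hy1 hy2 hy3]] /andP [t0 t1].
exists (scl t lx ++ scl (1 - t) ly); split.
- by apply: okl_cat; apply: okl_scl => //; rewrite subr_ge0.
- by rewrite wsum_cat !wsum_scl hx2 hy2; ring.
- move=> i; rewrite comb_cat !comb_scl; apply: lerD; apply: ler_wpM2l => //.
  by rewrite subr_ge0.
Qed.

Lemma NL_trans_list S T l : (forall a, T a -> NL S (realv a)) -> okl T l ->
  exists l', [/\ okl S l', wsum l' = wsum l & forall i, comb l' i <= comb l i].
Proof.
move=> hT; elim: l => [|p l IH] hl.
  by exists [::]; split.
have [/IH [l' [h1 h2 h3]] [/hT [la [ha1 ha2 ha3]] hp]] := okl_cons hl.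
exists (scl p.1 la ++ l'); split.
- by apply: okl_cat => //; apply: okl_scl.
- by rewrite wsum_cat wsum_scl ha2 h2 wsum_cons mulr1.
- by move=> i; rewrite comb_cat comb_scl comb_cons; apply: lerD => //; apply: ler_wpM2l.
Qed.

Lemma NL_trans S T x : (forall a, T a -> NL S (realv a)) -> NL T x -> NL S x.
Proof.
move=> hT [l [h1 h2 h3]]; have [l' [g1 g2 g3]] := NL_trans_list hT h1.
by exists l'; split => [||i]; [|rewrite g2|apply: le_trans (g3 i) (h3 i)].
Qed.

Definition lin (u x : 'I_m -> R) : R := \sum_(i < m) u i * x i.

Lemma lin_comb u l : lin u (comb l) = \sum_(p <- l) p.1 * lin u (realv p.2).
Proof.
rewrite /lin /comb; under eq_bigr => i _ do rewrite mulr_sumr.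
rewrite exchange_big /=; apply: eq_bigr => p _; rewrite mulr_sumr.
by apply: eq_bigr => i _ /=; rewrite /realv; ring.
Qed.

Lemma NL_lb S u b x : (forall i, 0 <= u i) -> (forall s, S s -> b <= lin u (realv s)) ->
  NL S x -> b <= lin u x.
Proof.
move=> hu hS [l [h1 h2 h3]].
have -> : b = \sum_(p <- l) p.1 * b by rewrite -mulr_suml -/(wsum l) h2 mul1r.
apply: (@le_trans _ _ (lin u (comb l))).
  rewrite lin_comb big_seq [X in _ <= X]big_seq; apply: ler_sum => p /h1 [hp1 hp2].
  by apply: ler_wpM2l => //; apply: hS.
by apply: ler_sum => i _; apply: ler_wpM2l.
Qed.

Definition msumset A B (c : mon m) := exists a b, [/\ A a, B b & c = madd a b].

Lemma NL_msum A B x y : NL A x -> NL B y -> NL (msumset A B) (fun i => x i + y i).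
Proof.
case=> lx [hx1 hx2 hx3] [ly [hy1 hy2 hy3]].
exists [seq (p.1 * q.1, madd p.2 q.2) | p <- lx, q <- ly]; split.
- move=> r /allpairsP [[p q] [/= hp hq ->]] /=.
  have [hp1 hp2] := hx1 p hp; have [hq1 hq2] := hy1 q hq.
  by split; [exists p.2, q.2|apply: mulr_ge0].
- rewrite /wsum big_allpairs_dep /=.
  under eq_bigr => p _ do rewrite -mulr_sumr -/(wsum ly) hy2 mulr1.
  exact: hx2.
- move=> i; rewrite /comb big_allpairs_dep /=.
  have hy2' : \sum_(q <- ly) q.1 = 1 := hy2.
  have hx2' : \sum_(p <- lx) p.1 = 1 := hx2.
  have E p : \sum_(q <- ly) p.1 * q.1 * (madd p.2 q.2 i)%:R =
             p.1 * (p.2 i)%:R + p.1 * comb ly i.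
    rewrite (eq_bigr (fun q : R * mon m => p.1 * (p.2 i)%:R * q.1 + p.1 * (q.1 * (q.2 i)%:R))); last first.
      by move=> q _; rewrite ffunE natrD; ring.
    by rewrite big_split /= -mulr_sumr -mulr_sumr hy2' mulr1.
  rewrite (eq_bigr _ (fun p _ => E p)) big_split /= -mulr_suml hx2' mul1r.
  exact: lerD (hx3 i) (hy3 i).
Qed.


Lemma is_vertex_ext (P Q : ('I_m -> R) -> Prop) v :
  (forall x, P x <-> Q x) -> is_vertex P v -> is_vertex Q v.
Proof.
move=> hPQ [hv h]; split; first by apply/hPQ.
by move=> x y t /hPQ hx /hPQ hy; apply: h.
Qed.

Lemma realv_inj (a b : mon m) : (forall i, realv a i = realv b i) -> a = b.
Proof. by move=> h; apply/ffunP => i; apply/eqP; rewrite -(eqr_nat R) /= -/(realv a i) h. Qed.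

Lemma wsum0_comb S l : okl S l -> wsum l = 0 -> forall i, comb l i = 0.
Proof.
move=> hl /eqP; rewrite /wsum big_seq_cond psumr_eq0; last by move=> p /andP [/hl []].
move=> /allP h i.
have h' : forall p, p \in l -> p.1 = 0 by move=> p hp; move: (h p hp); rewrite hp /= => /eqP.
by rewrite /comb big_seq big1 // => p /h' ->; rewrite mul0r.
Qed.

Lemma NL_comb S l : okl S l -> wsum l = 1 -> NL S (comb l).
Proof. by move=> h1 h2; exists l; split. Qed.

Lemma vtx_in S c : is_vertex (NL S) (realv c) -> S c.
Proof.
case=> [[l [hl hw hc]] hv].
have hx : NL S (comb l) by exists l.
have hy : NL S (fun i => 2 * realv c i - comb l i).
  apply: (NL_up hx) => i. have := hc i. move=> h. lra.
have e1 : forall i, comb l i = realv c i.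
  have h2 : (0:R) < 1/2 by lra.
  have h3 : (1/2:R) < 1 by lra.
  have H := hv _ _ (1/2) hx hy h2 h3.
  have : forall i, realv c i = 1/2 * comb l i + (1 - 1/2) * (2 * realv c i - comb l i).
    by move=> j; field.
  move=> /H {}H i; have := H i; lra.
have [p hp hp0] : exists2 p, p \in l & 0 < p.1.
  apply: NNPP => hn; have : wsum l = 0.
    rewrite /wsum big_seq big1 // => p hp; case: (hl p hp) => _ h0.
    by apply/eqP; rewrite eq_le h0 andbT leNgt; apply/negP => h; apply: hn; exists p.
  by rewrite hw => /eqP; rewrite oner_eq0.
pose l' := rem p l.
have hl' : okl S l' by move=> q /mem_rem /hl.
have ew : wsum l = p.1 + wsum l' by rewrite /wsum (big_rem p) //.
have ec i : comb l i = p.1 * (p.2 i)%:R + comb l' i by rewrite /comb (big_rem p) //.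
have hw' := wsum_ge0 hl'.
case: (hl p hp) => hSp _.
case: (ltrP p.1 1) => hp1.
  have h1w : 0 < 1 - p.1 by rewrite subr_gt0.
  have hy' : NL S (comb (scl (1 / (1 - p.1)) l')).
    apply: NL_comb; first by apply: okl_scl => //; rewrite divr_ge0 // ltW.
    rewrite wsum_scl; have -> : wsum l' = 1 - p.1 by lra.
    by field; rewrite gt_eqF.
  have := hv _ _ p.1 (NL_mem hSp) hy' hp0 hp1.
  have H : forall i, realv c i = p.1 * realv p.2 i + (1 - p.1) * comb (scl (1 / (1 - p.1)) l') i.
    by move=> i; rewrite comb_scl -e1 ec /realv; field; rewrite gt_eqF.
  move=> /(_ H) hxy.
  suff -> : c = p.2 by [].
  apply: realv_inj => i; rewrite H -hxy; ring.
have e0 : wsum l' = 0 by apply/eqP; rewrite eq_le hw' andbT; lra.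
have ep : p.1 = 1 by lra.
suff -> : c = p.2 by [].
apply: realv_inj => i; rewrite -e1 ec (wsum0_comb hl' e0) ep /realv; ring.
Qed.

Definition wf (f : mon m) l : R := \sum_(q <- l | q.2 == f) q.1.
Definition restl (f : mon m) l := filter (fun q : R * mon m => q.2 != f) l.

Lemma wsum_split f l : wsum l = wf f l + wsum (restl f l).
Proof. by rewrite /wsum /wf (bigID (fun q : R * mon m => q.2 == f)) /= big_filter. Qed.
Lemma comb_split f l i : comb l i = wf f l * (f i)%:R + comb (restl f l) i.
Proof.
rewrite /comb /wf (bigID (fun q : R * mon m => q.2 == f)) /= big_filter mulr_suml.
by congr (_ + _); apply: eq_bigr => q /eqP ->.
Qed.
Lemma wf_ge0 S f l : okl S l -> 0 <= wf f l.
Proof. by move=> h; rewrite /wf big_seq_cond sumr_ge0 // => q /andP [/h [] _ ->]. Qed.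

Lemma not_vertex_rem (Fl : seq (mon m)) f : f \in Fl ->
  ~ NL (fun a => a \in filter (predC1 f) Fl) (realv f) ->
  is_vertex (NL (fun a => a \in Fl)) (realv f).
Proof.
move=> hf hn; split; first exact: NL_mem.
move=> x y t [lx [hx1 hx2 hx3]] [ly [hy1 hy2 hy3]] ht0 ht1 hv.
pose Fl' := fun a => a \in filter (predC1 f) Fl.
have hr l : okl (fun a => a \in Fl) l -> okl Fl' (restl f l).
  move=> hl q; rewrite mem_filter => /andP [hq /hl [h1 h2]]; split => //.
  by rewrite /Fl' mem_filter /= hq h1.
have wsx := wsum_split f lx; have wsy := wsum_split f ly.
have wx0 := wf_ge0 f hx1; have wy0 := wf_ge0 f hy1.
have rx0 := wsum_ge0 (hr _ hx1); have ry0 := wsum_ge0 (hr _ hy1).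
have key i : t * comb (restl f lx) i + (1 - t) * comb (restl f ly) i <=
             (1 - (t * wf f lx + (1 - t) * wf f ly)) * realv f i.
  have := hx3 i; have := hy3 i; rewrite (comb_split f lx) (comb_split f ly) => hyi hxi.
  have e := hv i; rewrite /realv in e *.
  have h1 : t * (wf f lx * (f i)%:R + comb (restl f lx) i) <= t * x i by apply: ler_wpM2l => //; apply: ltW.
  have h2 : (1 - t) * (wf f ly * (f i)%:R + comb (restl f ly) i) <= (1 - t) * y i.
    by apply: ler_wpM2l => //; rewrite subr_ge0 ltW.
  set A := comb _ i in h1 *; set B := comb _ i in h2 *.
  have -> : (1 - (t * wf f lx + (1 - t) * wf f ly)) * (f i)%:R =
            (f i)%:R - t * (wf f lx * (f i)%:R) - (1 - t) * (wf f ly * (f i)%:R) by ring.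
  move: h1 h2; rewrite !mulrDr e; lra.
set nu := t * wf f lx + (1 - t) * wf f ly in key.
case: (ltrP nu 1) => hnu.
  have hnu0 : 0 < 1 - nu by rewrite subr_gt0.
  case: hn; exists (scl (t / (1 - nu)) (restl f lx) ++ scl ((1 - t) / (1 - nu)) (restl f ly)); split.
  - apply: okl_cat; apply: okl_scl; rewrite ?divr_ge0 ?subr_ge0 ?ltW //; exact: hr.
  - rewrite wsum_cat !wsum_scl.
    have -> : wsum (restl f lx) = 1 - wf f lx by lra.
    have -> : wsum (restl f ly) = 1 - wf f ly by lra.
    rewrite /nu in hnu0 *; field; lra.
  - move=> i; rewrite comb_cat !comb_scl.
    have -> : t / (1 - nu) * comb (restl f lx) i + (1 - t) / (1 - nu) * comb (restl f ly) i
            = (t * comb (restl f lx) i + (1 - t) * comb (restl f ly) i) / (1 - nu).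
      by field; rewrite gt_eqF.
    by rewrite ler_pdivrMr // [X in _ <= X]mulrC; apply: key.
have hwx : wf f lx = 1.
  have : wf f lx <= 1 by lra.
  have : wf f ly <= 1 by lra.
  move=> a b; rewrite /nu in hnu.
  have h1 : t * (1 - wf f lx) >= 0 by rewrite mulr_ge0 ?subr_ge0 // ltW.
  have h2 : (1 - t) * (1 - wf f ly) >= 0 by rewrite mulr_ge0 ?subr_ge0 // ltW.
  have h3 : t * (1 - wf f lx) + (1 - t) * (1 - wf f ly) = 1 - nu by rewrite /nu; ring.
  have h4 : t * (1 - wf f lx) = 0 by rewrite /nu in h3; lra.
  move/eqP: h4; rewrite mulf_eq0 (gt_eqF ht0) /= subr_eq0 => /eqP; lra.
have hwy : wf f ly = 1.
  have : wf f ly <= 1 by lra.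
  move=> b; rewrite /nu hwx mulr1 in hnu.
  have h2 : (1 - t) * (1 - wf f ly) >= 0 by rewrite mulr_ge0 ?subr_ge0 // ltW.
  have h4 : (1 - t) * (1 - wf f ly) = 0.
    apply/eqP; rewrite eq_le h2 andbT.
    have -> : (1 - t) * (1 - wf f ly) = 1 - (t + (1 - t) * wf f ly) by ring.
    by rewrite subr_le0.
  move/eqP: h4; rewrite mulf_eq0 subr_eq0 => /orP [/eqP|/eqP]; lra.
have cx i : comb lx i = realv f i.
  by rewrite (comb_split f) hwx mul1r (wsum0_comb (hr _ hx1)) ?addr0 //; lra.
have cy i : comb ly i = realv f i.
  by rewrite (comb_split f) hwy mul1r (wsum0_comb (hr _ hy1)) ?addr0 //; lra.
move=> i; have := hx3 i; have := hy3 i; rewrite cx cy => hyi hxi.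
have e := hv i.
have A0 : 0 <= t * (x i - realv f i) by rewrite mulr_ge0 ?subr_ge0 // ltW.
have B0 : 0 <= (1 - t) * (y i - realv f i) by rewrite mulr_ge0 ?subr_ge0 // ltW.
have AB : t * (x i - realv f i) + (1 - t) * (y i - realv f i) = 0.
  by rewrite e; ring.
move/eqP: AB; rewrite paddr_eq0 // => /andP [].
rewrite !mulf_eq0 (gt_eqF ht0) subr_eq0 /= => /eqP ->.
have -> : (1 - t == 0) = false by apply: gt_eqF; rewrite subr_gt0.
by rewrite /= subr_eq0 => /eqP ->.
Qed.


Lemma M_fin n : forall Fl : seq (mon m), (size Fl <= n)%N -> exists G : seq (mon m),
  [/\ forall g, g \in G -> g \in Fl, forall f, f \in Fl -> NL (fun a => a \in G) (realv f)
    & forall g, g \in G -> is_vertex (NL (fun a => a \in G)) (realv g)].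
Proof.
elim: n => [|n IH] Fl.
  by rewrite leqn0 => /nilP ->; exists [::]; split.
move=> hs; case: (classic (forall f, f \in Fl -> is_vertex (NL (fun a => a \in Fl)) (realv f))) => hv.
  by exists Fl; split => // f hf; apply: NL_mem.
have [f hf] : exists f, ~ (f \in Fl -> is_vertex (NL (fun a => a \in Fl)) (realv f)).
  by apply: NNPP => h; apply: hv => f; apply: NNPP => hf; apply: h; exists f.
have hfF : f \in Fl by apply: NNPP => h; apply: hf.
have hnv : ~ is_vertex (NL (fun a => a \in Fl)) (realv f) by move=> h; apply: hf.
have hNL : NL (fun a => a \in filter (predC1 f) Fl) (realv f).
  by apply: NNPP => h; apply: hnv; apply: not_vertex_rem.
have hsz : (size (filter (predC1 f) Fl) <= n)%N.
  rewrite size_filter -ltnS (leq_trans _ hs) //.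
  have hc : (0 < count (pred1 f) Fl)%N by rewrite -has_count; apply/hasP; exists f => //=.
  have e : count (predC (predC1 f)) Fl = count (pred1 f) Fl.
    by apply: eq_count => a /=; rewrite negbK.
  by rewrite -(count_predC (predC1 f) Fl) e -addn1 leq_add2l.
have [G [g1 g2 g3]] := IH _ hsz.
exists G; split => //.
- by move=> g /g1; rewrite mem_filter => /andP [].
- move=> f' hf'; case: (f' =P f) => [->|ne].
    by apply: NL_trans hNL => a; apply: g2.
  by apply: g2; rewrite mem_filter /= hf' andbT; apply/eqP.
Qed.

Lemma NL_vtxset S x : NL S x -> NL (fun c => is_vertex (NL S) (realv c)) x.
Proof.
move=> hx; have [Fl [h1 h2]] := dickson S.
have [G [g1 g2 g3]] := M_fin (leqnn (size Fl)).
have eqN y : NL S y <-> NL (fun a => a \in G) y.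
  split; last by apply: NL_mono => a /g1 /h1.
  apply: NL_trans => a /h2 [f hf hfa].
  by apply: (NL_up (g2 f hf)) => i; rewrite /realv ler_nat.
apply: NL_mono (proj1 (eqN x) hx) => g hg.
by apply: (is_vertex_ext _ (g3 g hg)) => y; rewrite eqN.
Qed.

Lemma vtxE S v : is_vertex (newton S) v <-> is_vertex (NL S) v.
Proof. by split; apply: is_vertex_ext => y; rewrite newtonE. Qed.

Lemma NL_vtx S x : NL (vtx S) x <-> NL S x.
Proof.
split; first by apply: NL_mono => c /vtxE /vtx_in.
by move/NL_vtxset; apply: NL_mono => c /vtxE.
Qed.

Lemma NL_seteq S T : (forall a, S a <-> T a) -> forall x, NL S x <-> NL T x.
Proof. by move=> h x; split; apply: NL_mono => a /h. Qed.

Lemma vtx_congr S T : (forall x, NL S x <-> NL T x) -> forall a, vtx S a <-> vtx T a.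
Proof. by move=> h a; rewrite /vtx !vtxE; split; apply: is_vertex_ext => y; rewrite h. Qed.

Lemma vtx_seteq_iff S T : seteq (vtx S) (vtx T) <-> (forall x, NL S x <-> NL T x).
Proof.
split; last by move=> h; apply: vtx_congr.
by move=> h x; rewrite -NL_vtx (NL_seteq h) NL_vtx.
Qed.

Lemma NL_union_congr S S' T T' : (forall x, NL S x <-> NL S' x) -> (forall x, NL T x <-> NL T' x) ->
  forall x, NL (fun a => S a \/ T a) x <-> NL (fun a => S' a \/ T' a) x.
Proof.
move=> hS hT x; split; apply: NL_trans => a [ha|ha].
- by apply: NL_mono (proj1 (hS _) (NL_mem ha)) => b hb; left.
- by apply: NL_mono (proj1 (hT _) (NL_mem ha)) => b hb; right.
- by apply: NL_mono (proj2 (hS _) (NL_mem ha)) => b hb; left.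
- by apply: NL_mono (proj2 (hT _) (NL_mem ha)) => b hb; right.
Qed.

Lemma vodot_one A : seteq (vodot A (@vone m)) (vtx A).
Proof.
apply: vtx_congr; apply: NL_seteq => a; split.
  by case=> [x [y [hx hy ->]]]; rewrite hy madd0.
by move=> ha; exists a, (@mzero m); split => //; rewrite madd0.
Qed.

Lemma vle_iff A B : vle (vtx A) (vtx B) (@vone m) (@vone m) <-> forall a, A a -> NL B (realv a).
Proof.
rewrite /vle /voplus.
have e1 : forall x, NL (vodot (vtx A) (@vone m)) x <-> NL A x.
  by move=> x; rewrite (NL_seteq (vodot_one _)) !NL_vtx.
have e2 : forall x, NL (vodot (vtx B) (@vone m)) x <-> NL B x.
  by move=> x; rewrite (NL_seteq (vodot_one _)) !NL_vtx.
have e3 := NL_union_congr e1 e2.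
split.
  move=> h; have h' : seteq (vtx (fun a => vodot (vtx A) (@vone m) a \/ vodot (vtx B) (@vone m) a))
                           (vtx (vodot (vtx B) (@vone m))).
    by move=> a; rewrite -(vtx_congr (fun x => iff_sym (NL_vtx _ x))); apply: h.
  move/vtx_seteq_iff: h' => h' a ha.
  apply/e2; apply/h'; apply/e3; apply: NL_mem; by left.
move=> h a; split.
  move=> ha; apply/(vtx_congr (NL_vtx _)).
  apply: (proj1 (vtx_congr _ a) ha) => x; rewrite e3 e2; split; last by apply: NL_mono => b hb; right.
  by apply: NL_trans => b [/h //|hb]; apply: NL_mem.
move=> ha; apply: (proj2 (vtx_congr _ a) (proj2 (vtx_congr (NL_vtx _) a) ha)) => x.
rewrite e3 e2; split; last by apply: NL_mono => b hb; right.
by apply: NL_trans => b [/h //|hb]; apply: NL_mem.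
Qed.

End Geo.

End P3.

Module P4.
Import P1 P2 P3.
Import Order.TTheory GRing.Theory Num.Theory.
Local Open Scope ring_scope.

Lemma int_nat (z : int) : 0 <= z -> exists k : nat, z%:~R = k%:R :> rat.
Proof. by move=> hz; exists (absz z); rewrite -[z in LHS]gez0_abs // -abszE. Qed.

Lemma clear_den n (lam : nat -> rat) : (forall k, (k < n)%N -> 0 <= lam k) ->
  exists (D : nat) (z : nat -> nat), (0 < D)%N /\ forall k, (k < n)%N -> lam k * D%:R = (z k)%:R.
Proof.
elim: n => [|n IH] h.
  by exists 1%N, (fun _ => 0%N).
have [D [z [hD hz]]] := IH (fun k hk => h k (ltnW hk)).
have hn := h n (ltnSn n).
have [d hd] := int_nat (ltW (denq_gt0 (lam n))).
have hnq : 0 <= numq (lam n) by rewrite numq_ge0.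
have [a ha] := int_nat hnq.
exists (D * d)%N, (fun k => if (k < n)%N then (z k * d)%N else (a * D)%N); split.
  rewrite muln_gt0 hD /= -(ltr_nat rat) -hd.
  by rewrite ltr0z denq_gt0.
move=> k; rewrite ltnS leq_eqVlt => /orP [/eqP ->|hk].
  rewrite ltnn !natrM -ha -hd mulrA mulrAC -numqE; ring.
by rewrite hk !natrM -hz // mulrA.
Qed.

Section KL.
Variable m : nat.

Definition coord (a : mon m) (i : nat) : nat := if insub i is Some j then a j else 0%N.
Lemma coordE (a : mon m) (j : 'I_m) : coord a j = a j.
Proof. by rewrite /coord valK. Qed.

Fixpoint msumn (F : nat -> mon m) n : mon m :=
  match n with 0 => @mzero m | n.+1 => madd (msumn F n) (F n) end.
Lemma msumnE F n j : msumn F n j = (\sum_(k < n) F k j)%N.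
Proof.
elim: n => [|n IH]; first by rewrite big_ord0 /= ffunE.
by rewrite big_ord_recr /= ffunE IH.
Qed.

Variable lt : mon m -> mon m -> Prop.
Hypothesis Hmo : monomial_order lt.

Lemma leo_msumn F G n : (forall k, (k < n)%N -> leo lt (F k) (G k)) ->
  leo lt (msumn F n) (msumn G n).
Proof.
elim: n => [|n IH] h; first by right.
by apply: leo_add => //; [apply: IH => k hk; apply: h; apply: ltnW|apply: h].
Qed.

Lemma KL T a : (forall t, T t -> leo lt a t) -> forall c, NL T (realv c) -> leo lt a c.
Proof.
move=> hTa c /newtonE [n [pts [w [hT hw hsum hx]]]].
pose ptn k := if insub k is Some k' then pts k' else @mzero m.
have ptnE (k : 'I_n) : ptn k = pts k by rewrite /ptn valK.
case: (@separation rat n m (fun k i => (coord (ptn k) i)%:R) (fun i => (coord c i)%:R))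
  => [[lam [hl0 hl1 hl2]]|[u [g [hu hug hg]]]].
  have [D [z [hD hz]]] := clear_den hl0.
  have sz : (\sum_(k < n) z k)%N = D.
    apply/eqP; rewrite -(eqr_nat rat) natr_sum; apply/eqP.
    transitivity (\sum_(k < n) lam k * D%:R); first by apply: eq_bigr => k _; rewrite hz ?ltn_ord.
    by rewrite -mulr_suml hl1 mul1r.
  have hb (j : 'I_m) : (\sum_(k < n) z k * ptn k j <= D * c j)%N.
    rewrite -(ler_nat rat) natr_sum natrM.
    have := hl2 j (ltn_ord j); rewrite coordE => h.
    have := ler_wpM2r (ler0n rat D) h; rewrite mulr_suml => h'.
    rewrite [X in _ <= X]mulrC; apply: le_trans h'; rewrite le_eqVlt; apply/orP; left; apply/eqP.
    apply: eq_bigr => k _; rewrite natrM -hz ?ltn_ord // coordE; ring.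
  pose X := msumn (fun k => msc (z k) (ptn k)) n.
  have h1 : leo lt X (msc D c).
    apply: mle_leo => // j; rewrite msumnE ffunE.
    by under eq_bigr => k _ do rewrite ffunE.
  have h2 : leo lt (msc D a) X.
    have -> : msc D a = msumn (fun k => msc (z k) a) n.
      apply/ffunP => j; rewrite msumnE ffunE -sz big_distrl /=.
      by apply: eq_bigr => k _; rewrite ffunE.
    apply: leo_msumn => k hk; apply: leo_msc => //.
    by rewrite (ptnE (Ordinal hk)); apply: hTa; apply: hT.
  exact: (msc_leo_cancel Hmo hD (leo_trans Hmo h2 h1)).
exfalso.
pose S := fun s => exists k : 'I_n, s = pts k.
have hS : NL S (realv c).
  by apply/newtonE; exists n, pts, w; split => // k; exists k.
pose u' := fun i : 'I_m => ratr (u i) : R.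
have hlb := @NL_lb m S u' (ratr g) (realv c).
have : ratr g <= lin u' (realv c).
  apply: hlb => //.
    by move=> i; rewrite /u' ler0q hu.
  move=> s [k ->]; have := hg k (ltn_ord k); rewrite -(ler_rat R) => /le_trans; apply.
  rewrite rmorph_sum /lin le_eqVlt; apply/orP; left; apply/eqP; apply: eq_bigr => i _.
  by rewrite rmorphM /= ratr_nat ptnE coordE.
have : lin u' (realv c) < ratr g.
  move: hug; rewrite -(ltr_rat R) rmorph_sum => /(le_lt_trans _); apply.
  rewrite /lin le_eqVlt; apply/orP; left; apply/eqP; apply: eq_bigr => i _.
  by rewrite rmorphM /= ratr_nat coordE.
move=> h1 h2; have := lt_le_trans h1 h2; by rewrite ltxx.
Qed.
End KL.

Section SepR.
Variable m : nat.
Lemma sepR (Fl : seq (mon m)) (a : mon m) : ~ NL (fun x => x \in Fl) (realv a) ->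
  exists (u : 'I_m -> R) g, [/\ forall i, 0 <= u i, lin u (realv a) < g
     & forall f, f \in Fl -> g <= lin u (realv f)].
Proof.
move=> hn.
case: (@separation R (size Fl) m (fun k i => (coord (nth (@mzero m) Fl k) i)%:R) (fun i => (coord a i)%:R))
  => [[lam [hl0 hl1 hl2]]|[u [g [hu hug hg]]]].
  exfalso; apply: hn; apply/newtonE.
  exists (size Fl), (fun k => nth (@mzero m) Fl k), (fun k => lam k); split => //.
  - by move=> k; apply: mem_nth.
  - by move=> k; apply: hl0.
  - move=> i; have := hl2 i (ltn_ord i); rewrite coordE /realv => h.
    by apply: le_trans h; rewrite le_eqVlt; apply/orP; left; apply/eqP; apply: eq_bigr => k _; rewrite coordE.
exists (fun i => u i), g; split => //.
- by move=> i; apply: hu.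
- by apply: le_lt_trans hug; rewrite /lin le_eqVlt; apply/orP; left; apply/eqP; apply: eq_bigr => i _; rewrite coordE.
- move=> f hf; have hk : (index f Fl < size Fl)%N by rewrite index_mem.
  apply: le_trans (hg _ hk) _; rewrite /lin le_eqVlt; apply/orP; left; apply/eqP; apply: eq_bigr => i _.
  by rewrite coordE nth_index.
Qed.
End SepR.

End P4.

Module P5.
Import P1 P2 P3 P4.
Import Order.TTheory GRing.Theory Num.Theory.
Local Open Scope ring_scope.

Section Alg.
Variables (K : fieldType) (m : nat).
Implicit Types (f g h : ps K m) (a b c d : mon m).

Definition mleb a b := [forall i, (a i <= b i)%N].
Lemma mlebP a b : reflect (mle a b) (mleb a b).
Proof. exact: forallP. Qed.

Definition boxJ c := [pred J : {ffun 'I_m -> 'I_((\sum_(i < m) c i).+1)} | [forall i, (J i <= c i)%N]].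
Definition hJ c (J : {ffun 'I_m -> 'I_((\sum_(i < m) c i).+1)}) : mon m := [ffun i => nat_of_ord (J i)].
Definition box c := [seq hJ J | J <- enum (boxJ c)].

Lemma psmul_box f g c : psmul f g c = \sum_(b <- box c) f b * g (msub c b).
Proof.
rewrite /box big_map big_enum /psmul; apply: eq_big => // J _.
by congr (_ * g _); apply/ffunP => i; rewrite !ffunE.
Qed.

Lemma box_uniq c : uniq (box c).
Proof.
rewrite /box map_inj_uniq ?enum_uniq // => J J' e; apply/ffunP => i; apply: val_inj.
by move/ffunP: e => /(_ i); rewrite !ffunE.
Qed.

Lemma mem_box c b : (b \in box c) = mleb b c.
Proof.
apply/idP/idP.
  case/mapP => J; rewrite mem_enum => /forallP hJc ->.
  by apply/forallP => i; rewrite ffunE.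
move=> /forallP hb.
have hi i : (b i < (\sum_(j < m) c j).+1)%N.
  rewrite ltnS (leq_trans (hb i)) // (bigD1 i) //= leq_addr //.
apply/mapP; exists [ffun i => Ordinal (hi i)].
  by rewrite mem_enum; apply/forallP => i; rewrite ffunE /=.
by apply/ffunP => i; rewrite !ffunE.
Qed.

Lemma psmulE f g c (L : seq (mon m)) : uniq L -> (forall b, (b \in L) = mleb b c) ->
  psmul f g c = \sum_(b <- L) f b * g (msub c b).
Proof.
move=> hu hL; rewrite psmul_box; apply: perm_big; apply: uniq_perm => //; first exact: box_uniq.
by move=> b; rewrite mem_box hL.
Qed.

Lemma psmul_nz f g c : psmul f g c != 0 ->
  exists b, [/\ mle b c, f b != 0 & g (msub c b) != 0].
Proof.
rewrite psmul_box => h; apply: NNPP => hn; move/eqP: h; apply.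
apply: big1_seq => b /andP [_]; rewrite mem_box => /mlebP hb.
case: (f b =P 0) => [->|/eqP fb]; first by rewrite mul0r.
case: (g (msub c b) =P 0) => [->|/eqP gb]; first by rewrite mulr0.
by case: hn; exists b.
Qed.

Lemma psmul_single f g c b0 : mle b0 c ->
  (forall b, mle b c -> b <> b0 -> f b * g (msub c b) = 0) ->
  psmul f g c = f b0 * g (msub c b0).
Proof.
move=> h0 h; rewrite psmul_box (bigD1_seq b0) ?box_uniq ?mem_box //=; last exact/mlebP.
rewrite big1_seq ?addr0 // => b /andP [/eqP nb]; rewrite mem_box => /mlebP hb.
exact: h.
Qed.

Lemma msubsub a c : mle a c -> msub c (msub c a) = a.
Proof. by move=> h; apply/ffunP => i; rewrite !ffunE subKn. Qed.

Lemma psmulC f g : psmul f g = psmul g f.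
Proof.
apply: functional_extensionality => c.
rewrite psmul_box (@psmulE g f c (map (msub c) (box c))).
- rewrite [RHS]big_map big_seq [RHS]big_seq; apply: eq_bigr => b; rewrite mem_box => /mlebP hb.
  by rewrite msubsub // mulrC.
- rewrite map_inj_in_uniq ?box_uniq // => b b'; rewrite !mem_box => /mlebP h /mlebP h' e.
  by rewrite -(msubsub h) e msubsub.
- move=> d; apply/mapP/idP.
    by case=> b _ ->; apply/forallP => i; rewrite ffunE leq_subr.
  move=> /mlebP hd; exists (msub c d); first by rewrite mem_box; apply/forallP => i; rewrite ffunE leq_subr.
  by rewrite msubsub.
Qed.

Lemma psmulDr f g h : psmul f (psadd g h) = psadd (psmul f g) (psmul f h).
Proof.
apply: functional_extensionality => c; rewrite /psadd !psmul_box -big_split /=.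
by apply: eq_bigr => b _; rewrite mulrDr.
Qed.

Lemma psmulDl f g h : psmul (psadd f g) h = psadd (psmul f h) (psmul g h).
Proof. by rewrite psmulC psmulDr !(psmulC h). Qed.

Lemma msub0 c : msub c (@mzero m) = c.
Proof. by apply/ffunP => i; rewrite !ffunE subn0. Qed.

Lemma psmul1 f : psmul (@ps1 K m) f = f.
Proof.
apply: functional_extensionality => c.
rewrite (@psmul_single _ _ c (@mzero m)).
- by rewrite /ps1 eqxx mul1r msub0.
- by move=> i; rewrite ffunE.
- by move=> b _ hb; rewrite /ps1 ifN ?mul0r //; apply/eqP.
Qed.

Lemma psmulA f g h : psmul f (psmul g h) = psmul (psmul f g) h.
Proof.
apply: functional_extensionality => c.
pose B := box c.
have eR : psmul (psmul f g) h c =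
  \sum_(a <- B) \sum_(b <- B) (if mleb a b then f a * g (msub b a) * h (msub c b) else 0).
  rewrite psmul_box -/B.
  have e1 : forall b, b \in B -> psmul f g b * h (msub c b) =
       \sum_(a <- B) (if mleb a b then f a * g (msub b a) * h (msub c b) else 0).
    move=> b; rewrite mem_box => /mlebP hb.
    rewrite (@psmulE f g b [seq a <- B | mleb a b]).
    - by rewrite big_filter big_mkcond /= mulr_suml; apply: eq_bigr => a _; case: ifP; rewrite ?mul0r.
    - by rewrite filter_uniq // box_uniq.
    - move=> a; rewrite mem_filter mem_box; apply/andP/idP => [[]//|ha]; split => //.
      by apply/mlebP; apply: mle_trans hb; apply/mlebP.
  by rewrite big_seq (eq_bigr _ e1) -big_seq exchange_big.
rewrite eR psmul_box -/B big_seq [RHS]big_seq; apply: eq_bigr => a; rewrite mem_box => /mlebP ha.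
rewrite (@psmulE g h (msub c a) [seq msub b a | b <- [seq b <- B | mleb a b]]).
- rewrite big_map big_filter big_mkcond mulr_sumr; apply: eq_bigr => b _.
  case: ifP => /= hab; last by rewrite mulr0.
  have -> : msub (msub c a) (msub b a) = msub c b.
    apply/ffunP => i; rewrite !ffunE; move/mlebP: hab => /(_ i) hi.
    by rewrite subnBA // subnK.
  by rewrite mulrA.
- rewrite map_inj_in_uniq ?filter_uniq ?box_uniq // => b b'.
  rewrite !mem_filter => /andP [/mlebP h1 _] /andP [/mlebP h1' _] e.
  by rewrite -(msubK h1) e msubK.
- move=> d; apply/mapP/idP.
    case=> b; rewrite mem_filter mem_box => /andP [/mlebP hab /mlebP hbc] ->.
    by apply/forallP => i; rewrite !ffunE leq_sub2r.
  move=> /mlebP hd; exists (madd a d); last by rewrite maddK.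
  rewrite mem_filter mem_box; apply/andP; split; first by apply/mlebP/mle_add.
  apply/forallP => i; rewrite ffunE; have := hd i; rewrite ffunE => h2.
  by rewrite -(subnKC (ha i)) leq_add2l; exact: h2.
Qed.

Definition PS := ps K m.
HB.instance Definition _ := boolp.gen_eqMixin PS.
HB.instance Definition _ := boolp.gen_choiceMixin PS.
Definition psopp (f : PS) : PS := fun a => - f a.
Lemma psaddA : associative (@psadd K m).
Proof. by move=> f g h; apply: functional_extensionality => a; rewrite /psadd addrA. Qed.
Lemma psaddC : commutative (@psadd K m).
Proof. by move=> f g; apply: functional_extensionality => a; rewrite /psadd addrC. Qed.
Lemma psadd0 : left_id (@ps0 K m) (@psadd K m).
Proof. by move=> f; apply: functional_extensionality => a; rewrite /psadd /ps0 add0r. Qed.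
Lemma psaddN : left_inverse (@ps0 K m) psopp (@psadd K m).
Proof. by move=> f; apply: functional_extensionality => a; rewrite /psadd /ps0 /psopp addNr. Qed.
HB.instance Definition _ := GRing.isZmodule.Build PS psaddA psaddC psadd0 psaddN.
Lemma ps1_neq0 : (@ps1 K m : PS) != (@ps0 K m : PS).
Proof.
apply/eqP => e; have := congr1 (fun f : ps K m => f (@mzero m)) e.
by rewrite /ps1 /ps0 eqxx => /eqP; rewrite oner_eq0.
Qed.
Lemma psmulA' : associative (@psmul K m). Proof. by move=> f g h; apply: psmulA. Qed.
HB.instance Definition _ := GRing.Zmodule_isComNzRing.Build PS psmulA' psmulC psmul1 psmulDl ps1_neq0.

End Alg.

End P5.

Module P6.
Import P1 P2 P3 P4 P5.
Import Order.TTheory GRing.Theory Num.Theory.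
Local Open Scope ring_scope.

Section Main.
Variables (K : fieldType) (m : nat).
Implicit Types (f g h : ps K m) (p q r : pfrac K m) (a b c : mon m).

Lemma NL_eqv (S : mon m -> Prop) x y : NL S x -> (forall i, x i = y i) -> NL S y.
Proof. by move=> h e; apply: (NL_up h) => i; rewrite e. Qed.

Lemma realv_add a b i : realv (madd a b) i = realv a i + realv b i.
Proof. by rewrite /realv ffunE natrD. Qed.

Lemma lin_add (u x y : 'I_m -> R) : lin u (fun i => x i + y i) = lin u x + lin u y.
Proof. by rewrite /lin -big_split /=; apply: eq_bigr => i _; rewrite mulrDr. Qed.

Lemma lin_mono (u : 'I_m -> R) a b : (forall i, 0 <= u i) -> mle a b -> lin u (realv a) <= lin u (realv b).
Proof. by move=> hu hab; apply: ler_sum => i _; apply: ler_wpM2l => //; rewrite /realv ler_nat. Qed.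

Lemma inO_iff p : inO p <-> fvalid p /\ forall a, p.1 a != 0 -> NL (supp p.2) (realv a).
Proof. by rewrite /inO /trop vle_iff. Qed.

Lemma HM f g x y : NL (supp f) x -> NL (supp g) y -> NL (supp (psmul f g)) (fun i => x i + y i).
Proof.
move=> hx hy; have := NL_vtxset (NL_msum hx hy).
apply: NL_mono => c hv; have [a [b [ha hb ec]]] := vtx_in hv; rewrite /supp.
suff -> : psmul f g c = f a * g b by rewrite mulf_neq0.
have hac : mle a c by rewrite ec; apply: mle_add.
rewrite (@psmul_single K m f g c a hac); last first.
  move=> a' ha'c na'; case: (f a' =P 0) => [->|/eqP fa']; first by rewrite mul0r.
  case: (g (msub c a') =P 0) => [->|/eqP gb']; first by rewrite mulr0.
  exfalso; apply: na'.
  set b' := msub c a' in gb'.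
  have ec' : c = madd a' b' by rewrite msubK.
  have M1 : NL (msumset (supp f) (supp g)) (realv (madd a' b)) by apply: NL_mem; exists a', b.
  have M2 : NL (msumset (supp f) (supp g)) (realv (madd a b')) by apply: NL_mem; exists a, b'.
  have h2 : (0:R) < 1/2 by lra.
  have h3 : (1/2:R) < 1 by lra.
  have := proj2 hv _ _ (1/2) M1 M2 h2 h3.
  have E : forall i, realv c i = 1/2 * realv (madd a' b) i + (1 - 1/2) * realv (madd a b') i.
    move=> i; rewrite !realv_add.
    have e1 : realv c i = realv a i + realv b i by rewrite ec realv_add.
    have e2 : realv c i = realv a' i + realv b' i by rewrite {1}ec' realv_add.
    lra.
  move=> /(_ E) H; apply/ffunP => i; apply/eqP.
  have := H i; rewrite !realv_add /realv => e3.
  have e1 : (a i + b i = c i)%N by rewrite ec ffunE.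
  have e2 : (a' i + b' i = c i)%N by rewrite /b' ffunE subnKC //; apply: ha'c.
  have : ((a' i + b i)%:R = (a i + b' i)%:R :> R) by rewrite !natrD.
  move/eqP; rewrite eqr_nat => /eqP e4.
  clearbody b'; move: (a i) (a' i) (b i) (b' i) (c i) e1 e2 e4 => x1 x2 x3 x4 x5; lia.
by rewrite ec maddK.
Qed.


Lemma lin_min (u : 'I_m -> R) (l : seq (mon m)) x0 : x0 \in l ->
  exists2 v, v \in l & forall w, w \in l -> lin u (realv v) <= lin u (realv w).
Proof.
elim: l x0 => // a l IH x0 _; case: (classic (exists y, y \in l)) => [[y hy]|hn].
  have [v hv hvl] := IH y hy; case: (lerP (lin u (realv a)) (lin u (realv v))) => h.
    exists a; rewrite ?inE ?eqxx // => w; rewrite inE => /orP [/eqP ->//|/hvl hw].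
    exact: le_trans h hw.
  exists v; first by rewrite inE hv orbT.
  move=> w; rewrite inE => /orP [/eqP ->|/hvl //]; exact: ltW.
exists a; rewrite ?inE ?eqxx // => w; rewrite inE => /orP [/eqP ->//|hw].
by case: hn; exists w.
Qed.

Lemma lin_realv_add (u : 'I_m -> R) a b : lin u (realv (madd a b)) = lin u (realv a) + lin u (realv b).
Proof. by rewrite -lin_add; apply: eq_bigr => i _; rewrite realv_add. Qed.

Variable lt : mon m -> mon m -> Prop.
Hypothesis Hmo : monomial_order lt.

Lemma min_exists g : (exists a, g a != 0) -> exists x, is_min_supp lt g x.
Proof.
case=> a ha; have [x [hx hxl]] := @exists_min m lt Hmo (supp g) a ha.
exists x; split => // y hy nyx; case: (hxl y hy) => // e; by case: nyx.
Qed.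

Lemma min_lb g x : is_min_supp lt g x -> forall y, g y != 0 -> leo lt x y.
Proof. by case=> hx h y hy; case: (classic (y = x)) => [->|ne]; [right|left; apply: h]. Qed.

Lemma min_uniq g x y : is_min_supp lt g x -> is_min_supp lt g y -> x = y.
Proof.
move=> hx hy; apply: (leo_antisym Hmo).
  by apply: (min_lb hx); case: hy.
by apply: (min_lb hy); case: hx.
Qed.

Lemma lb_min g x : g x != 0 -> (forall y, g y != 0 -> leo lt x y) -> is_min_supp lt g x.
Proof. by move=> hx h; split => // y hy ne; case: (h y hy) => // e; case: ne. Qed.

Lemma lead f g x y : (forall a, f a != 0 -> leo lt x a) -> (forall b, g b != 0 -> leo lt y b) ->
  psmul f g (madd x y) = f x * g y.
Proof.
move=> hf hg; rewrite (@psmul_single K m f g (madd x y) x (mle_add x y)); last first.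
  move=> b hb nbx; case: (f b =P 0) => [->|/eqP fb]; first by rewrite mul0r.
  case: (g (msub (madd x y) b) =P 0) => [->|/eqP gb]; first by rewrite mulr0.
  exfalso; have h1 : lt x b by case: (hf b fb) => // e; case: nbx.
  have := lt_leo_add Hmo h1 (hg _ gb); rewrite msubK // => /(lt_irr Hmo).
  by [].
by rewrite maddK.
Qed.

Lemma lead_lb f g x y : (forall a, f a != 0 -> leo lt x a) -> (forall b, g b != 0 -> leo lt y b) ->
  forall c, psmul f g c != 0 -> leo lt (madd x y) c.
Proof.
move=> hf hg c /psmul_nz [b [hb fb gb]].
by rewrite -(msubK hb); apply: (leo_add Hmo); [apply: hf|apply: hg].
Qed.

Lemma prod_min f g x y : is_min_supp lt f x -> is_min_supp lt g y ->
  is_min_supp lt (psmul f g) (madd x y) /\ psmul f g (madd x y) = f x * g y.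
Proof.
move=> hx hy; have e := lead (min_lb hx) (min_lb hy).
split => //; apply: lb_min; last exact: lead_lb (min_lb hx) (min_lb hy).
by rewrite /supp e mulf_neq0 //; [case: hx|case: hy].
Qed.

Lemma num_lb p x : inO p -> is_min_supp lt p.2 x -> forall a, p.1 a != 0 -> leo lt x a.
Proof.
move=> /inO_iff [_ h] hx a ha; apply: (KL Hmo _ (h a ha)).
exact: min_lb hx.
Qed.

Lemma fvalid_mul f g : (exists a, f a != 0) -> (exists b, g b != 0) -> exists c, psmul f g c != 0.
Proof.
move=> /min_exists [x hx] /min_exists [y hy]; have [[h _] _] := prod_min hx hy.
by exists (madd x y).
Qed.

Lemma inO_add p q : inO p -> inO q -> inO (fadd p q).
Proof.
move=> hp hq; have [hp1 hp2] := proj1 (inO_iff p) hp; have [hq1 hq2] := proj1 (inO_iff q) hq.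
apply/inO_iff; split; first exact: fvalid_mul.
move=> a /=; rewrite /psadd => ha.
have : psmul p.1 q.2 a != 0 \/ psmul q.1 p.2 a != 0.
  case: (psmul p.1 q.2 a =P 0) => [e1|/eqP e1]; last by left.
  by right; apply/eqP => e2; move: ha; rewrite e1 e2 addr0 eqxx.
case=> /psmul_nz [b [hb h1 h2]].
  apply: (NL_eqv (HM (hp2 b h1) (NL_mem h2))) => i; by rewrite -realv_add msubK.
apply: (NL_eqv (HM (NL_mem h2) (hq2 b h1))) => i; by rewrite addrC -realv_add msubK.
Qed.

Lemma inO_mul p q : inO p -> inO q -> inO (fmul p q).
Proof.
move=> hp hq; have [hp1 hp2] := proj1 (inO_iff p) hp; have [hq1 hq2] := proj1 (inO_iff q) hq.
apply/inO_iff; split; first exact: fvalid_mul.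
move=> a /= /psmul_nz [b [hb h1 h2]].
apply: (NL_eqv (HM (hp2 b h1) (hq2 _ h2))) => i; by rewrite -realv_add msubK.
Qed.

Lemma inO_feq p q : inO p -> fvalid q -> feq p q -> inO q.
Proof.
move=> hp hq hpq; have [hp1 hp2] := proj1 (inO_iff p) hp.
apply/inO_iff; split => // a ha; apply: NNPP => hn.
have [Fq [hFq1 hFq2]] := dickson (supp q.2).
have hnF : ~ NL (fun x => x \in Fq) (realv a).
  by move=> h; apply: hn; apply: NL_mono h => b /hFq1.
have [u [g [hu hug hg]]] := sepR hnF.
have hq2 s : supp q.2 s -> g <= lin u (realv s).
  by move=> /hFq2 [f hf hfs]; apply: le_trans (hg f hf) (lin_mono hu hfs).
have [Fp [hFp1 hFp2]] := dickson (supp p.2).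
case: hp1 => s0 hs0; have [f0 hf0 _] := hFp2 s0 hs0.
have [v hv hvl] := lin_min u hf0.
have hp2' s : supp p.2 s -> lin u (realv v) <= lin u (realv s).
  by move=> /hFp2 [f hf hfs]; apply: le_trans (hvl f hf) (lin_mono hu hfs).
have hp1' s : p.1 s != 0 -> lin u (realv v) <= lin u (realv s).
  by move=> hs; apply: (NL_lb hu hp2' (hp2 s hs)).
have H := HM (NL_mem ha) (NL_mem (hFp1 v hv)).
have H' : NL (supp (psmul p.1 q.2)) (fun i => realv a i + realv v i).
  by apply: NL_mono H => c; rewrite /supp hpq.
have := NL_lb (b := lin u (realv v) + g) hu _ H'.
rewrite lin_add; have : lin u (realv a) + lin u (realv v) < lin u (realv v) + g by lra.
move=> h1 h2; suff : lin u (realv v) + g <= lin u (realv a) + lin u (realv v) by lra.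
apply: h2 => s /psmul_nz [b [hb h1' h2']].
rewrite -(msubK hb) lin_realv_add; apply: lerD; [exact: hp1'|exact: hq2].
Qed.

End Main.

End P6.

Module P7.
Import P1 P2 P3 P4 P5 P6.
Import Order.TTheory GRing.Theory Num.Theory.
Local Open Scope ring_scope.

Lemma ring_id (K : fieldType) m (W1 W2 r1 r2 : PS K m) :
  psmul (psadd (psmul W1 (psmul r2 W2)) (psmul (psadd (psmul r1 W2) (psmul (psopp W1) r2)) W2)) r2
  = psmul r1 (psmul W2 (psmul r2 W2)).
Proof.
change ((W1 * (r2 * W2) + (r1 * W2 + (- W1) * r2) * W2) * r2 = r1 * (W2 * (r2 * W2))).
ring.
Qed.

Section Fin.
Variables (K : fieldType) (m : nat) (lt : mon m -> mon m -> Prop).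
Hypothesis Hmo : monomial_order lt.
Implicit Types (f g h : ps K m) (p q r : pfrac K m) (a b c : mon m).

Definition lbd f x := forall a, f a != 0 -> leo lt x a.
Lemma nlb p x : inO p -> is_min_supp lt p.2 x -> lbd p.1 x.
Proof. by move=> hp hx a; apply: (@num_lb K m lt Hmo p x hp hx a). Qed.
Lemma mlb g x : is_min_supp lt g x -> lbd g x.
Proof. by move=> hx a; apply: (@min_lb K m lt g x hx a). Qed.

Definition Val p (v d : K) := exists x, [/\ is_min_supp lt p.2 x, p.1 x = v & p.2 x = d].

Lemma Val_exists p : inO p -> exists v d, Val p v d.
Proof.
move=> hp; have [hv _] := proj1 (inO_iff p) hp.
have [x hx] := min_exists Hmo hv; by exists (p.1 x), (p.2 x), x.
Qed.

Lemma Val_den p v d : Val p v d -> d != 0.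
Proof. by case=> x [[hx _] _ <-]. Qed.

Lemma mcond_iff p v d : Val p v d -> (mcond lt p <-> v = 0).
Proof.
case=> x [hx <- _]; split; first by case=> y [hy e]; rewrite (min_uniq Hmo hx hy).
by move=> e; exists x.
Qed.

Lemma Val_mul p q vp dp vq dq : inO p -> inO q -> Val p vp dp -> Val q vq dq ->
  Val (fmul p q) (vp * vq) (dp * dq).
Proof.
move=> hp hq [x [hx <- <-]] [y [hy <- <-]].
have [h1 h2] := prod_min Hmo hx hy.
exists (madd x y); split => //=.
exact: (@lead K m lt Hmo p.1 q.1 x y (nlb hp hx) (nlb hq hy)).
Qed.

Lemma Val_add p q vp dp vq dq : inO p -> inO q -> Val p vp dp -> Val q vq dq ->
  Val (fadd p q) (vp * dq + vq * dp) (dp * dq).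
Proof.
move=> hp hq [x [hx <- <-]] [y [hy <- <-]].
have [h1 h2] := prod_min Hmo hx hy.
exists (madd x y); split => //=; rewrite /psadd.
rewrite (lead Hmo (nlb hp hx) (mlb hy)) maddC.
by rewrite (lead Hmo (nlb hq hy) (mlb hx)).
Qed.

Lemma Val_feq p q vp dp vq dq : inO p -> inO q -> feq p q -> Val p vp dp -> Val q vq dq ->
  vp * dq = vq * dp.
Proof.
move=> hp hq hpq [x [hx <- <-]] [y [hy <- <-]].
rewrite -(lead Hmo (nlb hp hx) (mlb hy)) hpq maddC.
by rewrite (lead Hmo (nlb hq hy) (mlb hx)).
Qed.

Lemma conj2 p q : inO p -> fvalid q -> feq p q -> (mcond lt p <-> mcond lt q).
Proof.
move=> hp hq hpq; have hq' := inO_feq hp hq hpq.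
have [vp [dp Vp]] := Val_exists hp; have [vq [dq Vq]] := Val_exists hq'.
rewrite (mcond_iff Vp) (mcond_iff Vq).
have e := Val_feq hp hq' hpq Vp Vq.
have np := Val_den Vp; have nq := Val_den Vq.
split => h0.
  by move: e; rewrite h0 mul0r => /esym /eqP; rewrite mulf_eq0 (negPf np) orbF => /eqP.
by move: e; rewrite h0 mul0r => /eqP; rewrite mulf_eq0 (negPf nq) orbF => /eqP.
Qed.

Lemma mlt_iff p : mlt lt p <-> inO p /\ mcond lt p.
Proof.
split; first by case=> hp [q [hq hpq hm]]; split => //; apply/(conj2 hp hq hpq).
by case=> hp hm; split => //; exists p; split => //; case: (proj1 (inO_iff p) hp).
Qed.

Definition psC (k : K) : ps K m := fun c => if c == @mzero m then k else 0.

Lemma psC_lb k a : psC k a != 0 -> leo lt (@mzero m) a.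
Proof. rewrite /psC /=; case: (a =P @mzero m) => [->|_]; first by move=> _; right. by rewrite eqxx. Qed.

Lemma inO_C (a b : K) : a != 0 -> inO (psC b, psC a).
Proof.
move=> ha; apply/inO_iff; split; first by exists (@mzero m); rewrite /= /psC /= eqxx.
move=> c /=; rewrite /psC /=; case: (c =P @mzero m) => [->|_]; last by rewrite eqxx.
by move=> _; apply: NL_mem; rewrite /supp /psC /= eqxx.
Qed.

Lemma Val_C (a b : K) : a != 0 -> Val (psC b, psC a) b a.
Proof.
move=> ha; exists (@mzero m); split => /=; last by rewrite /psC /= eqxx.
  apply: lb_min; first by rewrite /psC /= eqxx.
  by move=> y; apply: psC_lb.
by rewrite /psC /= eqxx.
Qed.

Lemma psC_mul k f : psmul (psC k) f = fun c => k * f c.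
Proof.
apply: functional_extensionality => c.
rewrite (@psmul_single K m (psC k) f c (@mzero m)).
- by rewrite /psC /= eqxx msub0.
- by move=> i; rewrite ffunE.
- by move=> b _ hb; rewrite /psC /= ifN ?mul0r //; apply/eqP.
Qed.

Theorem main_thm : maximal_idealO (@mlt K m lt) /\
  (forall p q : pfrac K m, inO p -> fvalid q -> feq p q -> (mcond lt p <-> mcond lt q)).
Proof.
split; last exact: conj2.
have I1 p : mlt lt p -> inO p by case.
have I2 p q : fvalid q -> feq p q -> mlt lt p -> mlt lt q.
  move=> hq hpq /mlt_iff [hp hm]; apply/mlt_iff; split; first exact: inO_feq hp hq hpq.
  by apply/(conj2 hp hq hpq).
have I3 : mlt lt (@fzero K m).
  have h1 : (1 : K) != 0 by rewrite oner_eq0.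
  apply/mlt_iff; split.
    apply/inO_iff; split; first by exists (@mzero m); rewrite /= /ps1 eqxx.
    by move=> a /=; rewrite /ps0 eqxx.
  have V : Val (@fzero K m) 0 1.
    have [x [hx _ e]] := Val_C 0 h1; exists x; split => //.
  by apply/(mcond_iff V).
have I4 p q : mlt lt p -> mlt lt q -> mlt lt (fadd p q).
  move=> /mlt_iff [hp hmp] /mlt_iff [hq hmq]; apply/mlt_iff; split; first exact: (@inO_add K m lt Hmo p q hp hq).
  have [vp [dp Vp]] := Val_exists hp; have [vq [dq Vq]] := Val_exists hq.
  apply/(mcond_iff (Val_add hp hq Vp Vq)).
  by rewrite (proj1 (mcond_iff Vp) hmp) (proj1 (mcond_iff Vq) hmq) !mul0r addr0.
have I5 r p : inO r -> mlt lt p -> mlt lt (fmul r p).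
  move=> hr /mlt_iff [hp hmp]; apply/mlt_iff; split; first exact: (@inO_mul K m lt Hmo r p hr hp).
  have [vp [dp Vp]] := Val_exists hp; have [vr [dr Vr]] := Val_exists hr.
  apply/(mcond_iff (Val_mul hr hp Vr Vp)).
  by rewrite (proj1 (mcond_iff Vp) hmp) mulr0.
split.
- by split.
- move=> /mlt_iff [hp hm].
  have V : Val (@fone K m) 1 1.
    have h1 : (1 : K) != 0 by rewrite oner_eq0.
    have [x [hx e1 e2]] := Val_C 1 h1; by exists x; split.
  by move/(mcond_iff V): hm => /eqP; rewrite oner_eq0.
move=> J [J1 J2 J3 J4 J5] hsub.
case: (classic (forall p, J p -> mlt lt p)) => [h|h]; [left => //|right].
have [p [Jp nmp]] : exists p, J p /\ ~ mlt lt p.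
  by apply: NNPP => hn; apply: h => p Jp; apply: NNPP => hm; apply: hn; exists p.
have hp := J1 p Jp.
have [ap [bp Vp]] := Val_exists hp.
have nap : ap != 0 by apply/eqP => e; apply: nmp; apply/mlt_iff; split => //; apply/(mcond_iff Vp).
have nbp := Val_den Vp.
move=> r hr.
have [vr [dr Vr]] := Val_exists hr.
have he := inO_C bp nap; have Ve := Val_C bp nap.
have hu := inO_mul Hmo hr he; have Vu := Val_mul hr he Vr Ve.
pose w := fmul (fmul r (psC bp, psC ap)) p.
have Jw : J w by apply: J5.
have hw := inO_mul Hmo hu hp; have Vw := Val_mul hu hp Vu Vp.
have n1 : (1 : K) != 0 by rewrite oner_eq0.
have hmo := inO_C (-1) n1; have Vmo := Val_C (-1) n1.
pose w' := fmul (psC (-1), psC 1) w.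
have Jw' : J w' by apply: J5.
have hw' := inO_mul Hmo hmo hw; have Vw' := Val_mul hmo hw Vmo Vw.
pose z := fadd r w'.
have hz := inO_add Hmo hr hw'; have Vz := Val_add hr hw' Vr Vw'.
have mz : mlt lt z.
  apply/mlt_iff; split => //; apply/(mcond_iff Vz); ring.
have Jz := hsub z mz.
have Jwz : J (fadd w z) by apply: J4.
apply: (J2 _ _ _ _ Jwz); first by case: (proj1 (inO_iff r) hr).
move=> c /=.
have fun1 (f : ps K m) : (fun c => 1 * f c) = f.
  by apply: functional_extensionality => c'; rewrite mul1r.
have funN1 (f : ps K m) : (fun c => -1 * f c) = psopp f.
  by apply: functional_extensionality => c'; rewrite /psopp mulN1r.
by rewrite !psC_mul fun1 funN1 ring_id.
Qed.

End Fin.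

End P7.

Import P1 P2 P3 P4 P5 P6 P7.
Local Open Scope ring_scope.

Theorem proposition4p5 (K : fieldType) (m : nat)
  (lt : mon m -> mon m -> Prop) :
  [pchar K] =i pred0 -> (1 <= m)%N -> monomial_order lt ->
  maximal_idealO (@mlt K m lt) /\
  (forall p q : pfrac K m, inO p -> fvalid q -> feq p q ->
     (mcond lt p <-> mcond lt q)).
Proof.
move=> _ _ Hmo; exact: (main_thm K Hmo).
Qed.
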